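(* If $\lambda>0$, $0<x<\pi$ and $x\lambda<\pi/2$, then \[ \int_0^{x}\frac{\sin \lambda y}{\sin y}\,dy>\mathrm{Si}(\lambda\sin x), \] where $\mathrm{Si}(t)=\int_0^t\frac{\sin u}{u}\,du$. *)

(* Defs.v *)
From Stdlib Require Import Reals.
From Coquelicot Require Import Coquelicot.
Open Scope R_scope.

Definition sinc (u : R) : R := if Req_EM_T u 0 then 1 else sin u / u.

Definition Si (t : R) : R := RInt sinc 0 t.

(* Integrand sin(lambda y) / sin y, extended continuously by lambda at y = 0
   (the value at a single point does not affect the Riemann integral). *)
Definition sin_ratio (lam y : R) : R :=
  if Req_EM_T y 0 then lam else sin (lam * y) / sin y.

(* Main.v *)
Require Import Defs.
From Stdlib Require Import Reals Lra.
From Coquelicot Require Import Coquelicot.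
Open Scope R_scope.

Lemma sinc_cont0 : continuity_pt sinc 0.
Proof.
  unfold continuity_pt, continue_in, limit1_in, limit_in.
  intros eps Heps.
  destruct (derivable_pt_lim_sin 0 eps Heps) as [d Hd].
  exists d; split; [apply cond_pos|].
  intros y [[_ Hne] Hy]. simpl in Hy |- *. unfold R_dist in *.
  rewrite Rminus_0_r in Hy.
  assert (Hy0 : y <> 0) by (intro; subst; apply Hne; reflexivity).
  specialize (Hd y Hy0 Hy).
  rewrite Rplus_0_l, sin_0, cos_0, Rminus_0_r in Hd.
  unfold sinc; destruct (Req_EM_T y 0); [contradiction|].
  destruct (Req_EM_T 0 0); [|contradiction]. exact Hd.
Qed.

Lemma sinc_cont u : continuity_pt sinc u.
Proof.
  destruct (Req_EM_T u 0) as [->|n]; [apply sinc_cont0|].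
  apply continuity_pt_locally_ext with (f := fun u => sin u / u) (a := Rabs u).
  - now apply Rabs_pos_lt.
  - intros y Hy. unfold sinc. destruct (Req_EM_T y 0) as [e|]; [|reflexivity].
    subst. unfold Rdist in Hy. rewrite Rminus_0_l, Rabs_Ropp in Hy. lra.
  - assert (H := continuity_pt_div sin id u (continuity_sin u) (continuity_pt_id u) n).
    exact H.
Qed.

Lemma sinc_continuous u : continuous sinc u.
Proof. apply continuity_pt_filterlim, sinc_cont. Qed.

Lemma sinc_nz z : 0 <= z < PI -> sinc z <> 0.
Proof.
  intros Hz. unfold sinc. destruct (Req_EM_T z 0); [lra|].
  assert (0 < sin z) by (apply sin_gt_0; lra).
  assert (0 < sin z / z) by (apply Rdiv_lt_0_compat; lra). lra.
Qed.

Lemma sin_ratio_cont lam z : 0 < lam -> 0 <= z < PI -> continuous (sin_ratio lam) z.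
Proof.
  intros Hl Hz. apply continuity_pt_filterlim.
  apply continuity_pt_locally_ext with
    (f := fun y => lam * sinc (lam * y) / sinc y) (a := PI - z).
  - lra.
  - intros y Hy. unfold Rdist in Hy. apply Rabs_def2 in Hy.
    unfold sin_ratio. destruct (Req_EM_T y 0) as [e|n].
    + subst. rewrite Rmult_0_r. unfold sinc. destruct (Req_EM_T 0 0); [|contradiction]. field.
    + assert (sin y <> 0).
      { destruct (Rlt_le_dec 0 y).
        - assert (0 < sin y) by (apply sin_gt_0; lra). lra.
        - assert (sin y < 0) by (apply sin_lt_0_var; lra). lra. }
      unfold sinc. destruct (Req_EM_T y 0); [contradiction|].
      destruct (Req_EM_T (lam * y) 0) as [e|].
      { apply Rmult_integral in e. lra. }
      field. lra.
  - assert (H1 : continuity_pt (fun y => lam * y) z).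
    { assert (H := continuity_pt_scal id lam z (continuity_pt_id z)). exact H. }
    assert (H2 : continuity_pt (fun y => sinc (lam * y)) z).
    { assert (H := continuity_pt_comp (fun y => lam * y) sinc z H1 (sinc_cont _)). exact H. }
    assert (H3 : continuity_pt (fun y => lam * sinc (lam * y)) z).
    { assert (H := continuity_pt_scal _ lam z H2). exact H. }
    assert (H := continuity_pt_div _ sinc z H3 (sinc_cont z) (sinc_nz z Hz)). exact H.
Qed.

Lemma main_part lam a : 0 < lam -> 0 < a -> a <= PI / 2 -> a * lam < PI / 2 ->
  Si (lam * sin a) < RInt (sin_ratio lam) 0 a.
Proof.
  intros Hl Ha HaP Hal.
  assert (HPI := PI_RGT_0).
  unfold Si.
  replace 0 with (lam * sin 0) at 1 by (rewrite sin_0; ring).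
  rewrite <- (RInt_comp sinc (fun y => lam * sin y) (fun y => lam * cos y)).
  2:{ intros; apply sinc_continuous. }
  2:{ intros y _. split.
      - auto_derive; [exact I|ring].
      - apply continuity_pt_filterlim.
        assert (H := continuity_pt_scal cos lam y (continuity_cos y)). exact H. }
  apply RInt_lt.
  - exact Ha.
  - intros y Hy. apply sin_ratio_cont; lra.
  - intros y Hy. apply continuity_pt_filterlim.
    assert (H1 : continuity_pt (fun y => lam * cos y) y).
    { assert (H := continuity_pt_scal cos lam y (continuity_cos y)). exact H. }
    assert (H2 : continuity_pt (fun y => lam * sin y) y).
    { assert (H := continuity_pt_scal sin lam y (continuity_sin y)). exact H. }
    assert (H3 : continuity_pt (fun y => sinc (lam * sin y)) y).
    { assert (H := continuity_pt_comp (fun y => lam * sin y) sinc y H2 (sinc_cont _)). exact H. }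
    assert (H := continuity_pt_mult _ _ y H1 H3). exact H.
  - intros y Hy.
    change (lam * cos y * sinc (lam * sin y) < sin_ratio lam y).
    assert (Hs : 0 < sin y) by (apply sin_gt_0; lra).
    assert (Hsy : sin y < y) by (apply sin_lt_x; lra).
    assert (Hly : lam * y < PI / 2) by nra.
    assert (Hls : 0 < lam * sin y) by nra.
    assert (Hls2 : lam * sin y <= lam * y) by nra.
    assert (Hs1 : 0 < sin (lam * sin y)) by (apply sin_gt_0; lra).
    assert (Hs12 : sin (lam * sin y) <= sin (lam * y)) by (apply sin_incr_1; lra).
    assert (Hc : cos y < 1).
    { assert (E := sin2_cos2 y). unfold Rsqr in E. nra. }
    unfold sinc, sin_ratio.
    destruct (Req_EM_T (lam * sin y) 0); [lra|].
    destruct (Req_EM_T y 0); [lra|].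
    replace (lam * cos y * (sin (lam * sin y) / (lam * sin y)))
      with ((cos y * sin (lam * sin y)) / sin y) by (field; lra).
    unfold Rdiv. apply Rmult_lt_compat_r; [apply Rinv_0_lt_compat; lra|]. nra.
Qed.

Theorem proposition9 (lam x : R) :
  0 < lam -> 0 < x -> x < PI -> x * lam < PI / 2 ->
  RInt (sin_ratio lam) 0 x > Si (lam * sin x).
Proof.
  intros Hl Hx HxP Hxl.
  assert (HPI := PI_RGT_0).
  destruct (Rle_dec x (PI / 2)) as [Hle|Hgt].
  - apply main_part; lra.
  - set (a := PI - x).
    assert (Ha : 0 < a < x) by (unfold a; lra).
    assert (Hal : a * lam < PI / 2) by nra.
    rewrite <- (sin_PI_x x). fold a.
    assert (Hex1 : ex_RInt (sin_ratio lam) 0 a).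
    { apply (@ex_RInt_continuous R_CompleteNormedModule). intros z Hz.
      rewrite Rmin_left in Hz by lra. rewrite Rmax_right in Hz by lra.
      apply sin_ratio_cont; lra. }
    assert (Hex2 : ex_RInt (sin_ratio lam) a x).
    { apply (@ex_RInt_continuous R_CompleteNormedModule). intros z Hz.
      rewrite Rmin_left in Hz by lra. rewrite Rmax_right in Hz by lra.
      apply sin_ratio_cont; lra. }
    rewrite <- (@RInt_Chasles R_CompleteNormedModule _ 0 a x Hex1 Hex2).
    assert (H1 := main_part lam a Hl (proj1 Ha) ltac:(unfold a; lra) Hal).
    assert (H2 : 0 <= RInt (sin_ratio lam) a x).
    { apply RInt_ge_0; [lra|exact Hex2|].
      intros y Hy. unfold sin_ratio. destruct (Req_EM_T y 0); [lra|].
      assert (0 < sin y) by (apply sin_gt_0; lra).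
      assert (0 < sin (lam * y)) by (apply sin_gt_0; nra).
      left; apply Rdiv_lt_0_compat; lra. }
    change (Si (lam * sin a) < RInt (sin_ratio lam) 0 a + RInt (sin_ratio lam) a x).
    lra.
Qed.
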